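(* For $(\Gamma,\Delta)\in\mathcal{P}(\mathcal{L}_{\Box\!\!\rightarrow})\times\mathcal{P}(\mathcal{L}_{\Box\!\!\rightarrow})$, we have $\Gamma\not\models\Delta$ iff for every finite $\Gamma'\subseteq\Gamma$ and finite $\Delta'\subseteq\Delta$, $\Gamma'\not\models\Delta'$.
   Context: $\mathcal{L}_{\Box\!\!\rightarrow}$ is built from propositional variables with $\wedge,\vee,\to$, strong negation $\sim$, and a binary would-conditional $\Box\!\!\rightarrow$. A Nelsonian conditional model is $\mathcal{M}=(W,\leq,R,V^+,V^-)$ with $W\neq\emptyset$, $\leq$ a preorder, $V^\pm$ assigning $\leq$-upward-closed sets to variables, $R\subseteq W\times(\mathcal{P}(W)\times\mathcal{P}(W))\times W$ such that for all $X,Y$: (c1) $w\leq w'$ and $R_{(X,Y)}(w,v)$ imply $R_{(X,Y)}(w',v')$ for some $v'\geq v$; (c2) $R_{(X,Y)}(w,v)$ and $v\leq v'$ imply $R_{(X,Y)}(w',v')$ for some $w'\geq w$. Verification $\models^+$ / falsification $\models^-$: atoms by $V^\pm$; $\wedge$ verified iff both verified, falsified iff one falsified; $\vee$ dually; $\sim$ swaps; $w\models^+\psi\to\chi$ iff for all $v\geq w$, $v\models^+\psi$ implies $v\models^+\chi$; $w\models^-\psi\to\chi$ iff $w\models^+\psi$ and $w\models^-\chi$; $w\models^+\psi\Box\!\!\rightarrow\chi$ iff for all $v\geq w$ and $u$ with $R_{\|\psi\|}(v,u)$, $u\models^+\chi$; $w\models^-\psi\Box\!\!\rightarrow\chi$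 iff some $u$ has $R_{\|\psi\|}(w,u)$ and $u\models^-\chi$; $\|\psi\|=(\{w\mid w\models^+\psi\},\{w\mid w\models^-\psi\})$. $\Gamma\models\Delta$ ($\mathsf{N4CK}$-consequence) iff no pointed model verifies all members of $\Gamma$ and no member of $\Delta$. *)

(* Defs.v *)
From Stdlib Require Import List.

Inductive form : Type :=
| Var : nat -> form
| And : form -> form -> form
| Or : form -> form -> form
| Imp : form -> form -> form
| Neg : form -> form
| Cond : form -> form -> form.

Record model : Type := {
  W : Type;
  W_ne : inhabited W;
  le : W -> W -> Prop;
  le_refl : forall w, le w w;
  le_trans : forall u v w, le u v -> le v w -> le u w;
  R : (W -> Prop) -> (W -> Prop) -> W -> W -> Prop;
  Vp : nat -> W -> Prop;
  Vm : nat -> W -> Prop;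
  Vp_up : forall p w w', le w w' -> Vp p w -> Vp p w';
  Vm_up : forall p w w', le w w' -> Vm p w -> Vm p w';
  c1 : forall X Y w w' v, le w w' -> R X Y w v -> exists v', le v v' /\ R X Y w' v';
  c2 : forall X Y w v v', R X Y w v -> le v v' -> exists w', le w w' /\ R X Y w' v'
}.

Fixpoint ver (M : model) (w : W M) (A : form) {struct A} : Prop :=
  match A with
  | Var p => Vp M p w
  | And a b => ver M w a /\ ver M w b
  | Or a b => ver M w a \/ ver M w b
  | Imp a b => forall v, le M w v -> ver M v a -> ver M v b
  | Neg a => fal M w a
  | Cond a b => forall v u, le M w v ->
                  R M (fun x => ver M x a) (fun x => fal M x a) v u -> ver M u b
  end
with fal (M : model) (w : W M) (A : form) {struct A} : Prop :=
  match A with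
  | Var p => Vm M p w
  | And a b => fal M w a \/ fal M w b
  | Or a b => fal M w a /\ fal M w b
  | Imp a b => ver M w a /\ fal M w b
  | Neg a => ver M w a
  | Cond a b => exists u, R M (fun x => ver M x a) (fun x => fal M x a) w u /\ fal M u b
  end.

Definition conseq (Gamma Delta : form -> Prop) : Prop :=
  ~ exists (M : model) (w : W M),
      (forall A, Gamma A -> ver M w A) /\ (forall B, Delta B -> ~ ver M w B).

Definition finite_subset (S' S : form -> Prop) : Prop :=
  (exists l : list form, forall x, S' x <-> In x l) /\ (forall x, S' x -> S x).

(* Main.v *)
Require Import Defs.
From Stdlib Require Import List Classical FunctionalExtensionality PropExtensionality PeanoNat.
From Stdlib Require Cantor.
Import ListNotations.

Arguments Cantor.to_nat : simpl never.
Lemma to_nat_inj p q : Cantor.to_nat p = Cantor.to_nat q -> p = q.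
Proof.
  intro H. rewrite <- (Cantor.cancel_of_to p), <- (Cantor.cancel_of_to q), H. reflexivity.
Qed.

Fixpoint enc (A : form) : nat :=
  match A with
  | Var n => Cantor.to_nat (0, n)
  | And a b => Cantor.to_nat (1, Cantor.to_nat (enc a, enc b))
  | Or a b => Cantor.to_nat (2, Cantor.to_nat (enc a, enc b))
  | Imp a b => Cantor.to_nat (3, Cantor.to_nat (enc a, enc b))
  | Neg a => Cantor.to_nat (4, enc a)
  | Cond a b => Cantor.to_nat (5, Cantor.to_nat (enc a, enc b))
  end.

Lemma enc_inj : forall A B, enc A = enc B -> A = B.
Proof.
  induction A; destruct B; simpl; intro H; apply to_nat_inj in H; inversion H as [H'];
    try (apply to_nat_inj in H'; inversion H'); subst; try reflexivity;
    try (f_equal; auto).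
  all: try (f_equal; apply IHA; assumption).
Qed.

Definition codeX (p : bool * form) : nat :=
  Cantor.to_nat ((if fst p then 1 else 0), enc (snd p)).

Lemma codeX_inj p q : codeX p = codeX q -> p = q.
Proof.
  destruct p as [[|] a], q as [[|] b]; unfold codeX; simpl; intro H;
    apply to_nat_inj in H; inversion H as [H']; try apply enc_inj in H'; subst; auto.
  all: apply enc_inj in H1; subst; auto.
Qed.

Definition fsat {X : Type} (Phi : list X -> list X -> Prop) (G D : X -> Prop) :=
  forall lg ld, (forall x, In x lg -> G x) -> (forall x, In x ld -> D x) -> Phi lg ld.

Lemma fsat_anti {X} (Phi : list X -> list X -> Prop) G D G' D' :
  fsat Phi G D -> (forall p, G' p -> G p) -> (forall p, D' p -> D p) -> fsat Phi G' D'.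
Proof. intros H HG HD lg ld H1 H2. apply H; auto. Qed.

Section Lind.
Variable X : Type.
Variable code : X -> nat.
Hypothesis code_inj : forall x y, code x = code y -> x = y.
Variable Phi : list X -> list X -> Prop.
Hypothesis Phi_mono : forall lg ld lg' ld', Phi lg ld -> incl lg' lg -> incl ld' ld -> Phi lg' ld'.
Hypothesis Phi_cut : forall x lg ld, Phi lg ld -> Phi (x::lg) ld \/ Phi lg (x::ld).

Definition nf n := fun y => negb (Nat.eqb (code y) n).

Lemma step_ok G D n : fsat Phi G D ->
  fsat Phi (fun x => G x \/ (code x = n /\ fsat Phi (fun y => G y \/ code y = n) D))
           (fun x => D x \/ (code x = n /\ ~ fsat Phi (fun y => G y \/ code y = n) D)).
Proof.
  intro H. destruct (classic (fsat Phi (fun y => G y \/ code y = n) D)) as [Hs|Hn].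
  - intros lg ld Hlg Hld. apply Hs.
    + intros x Hx; destruct (Hlg x Hx) as [?|[? ?]]; auto.
    + intros x Hx; destruct (Hld x Hx) as [?|[? ?]]; [auto|contradiction].
  - intros lg ld Hlg Hld. apply NNPP; intro Hnp.
    pose proof Hn as Hn0. unfold fsat in Hn. apply not_all_ex_not in Hn as [lg1 Hn].
    apply not_all_ex_not in Hn as [ld1 Hn].
    apply imply_to_and in Hn as [Hlg1 Hn]. apply imply_to_and in Hn as [Hld1 Hn1].
    destruct (classic (exists x, In x lg1 /\ code x = n)) as [[x [Hx Hxc]]|Hno].
    + assert (HF : Phi (filter (nf n) lg1 ++ lg) (ld1 ++ filter (nf n) ld)).
      { apply H.
        - intros y Hy. apply in_app_or in Hy as [Hy|Hy].
          + apply filter_In in Hy as [Hy Hc]. unfold nf in Hc.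
            destruct (Hlg1 y Hy) as [?|Hc']; auto. rewrite Hc', Nat.eqb_refl in Hc. discriminate.
          + destruct (Hlg y Hy) as [?|[_ ?]]; [auto|contradiction].
        - intros y Hy. apply in_app_or in Hy as [Hy|Hy]; auto.
          apply filter_In in Hy as [Hy Hc]. unfold nf in Hc.
          destruct (Hld y Hy) as [?|[Hc' _]]; auto. rewrite Hc', Nat.eqb_refl in Hc. discriminate. }
      destruct (Phi_cut x _ _ HF) as [Hc|Hc].
      * apply Hn1. eapply Phi_mono; [exact Hc| |].
        -- intros y Hy. destruct (Nat.eq_dec (code y) n) as [e|e].
           ++ left. apply code_inj. congruence.
           ++ right. apply in_or_app; left. apply filter_In; split; auto.
              unfold nf. apply Nat.eqb_neq in e. rewrite e. reflexivity.
        -- intros y Hy. apply in_or_app; auto.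
      * apply Hnp. eapply Phi_mono; [exact Hc| |].
        -- intros y Hy. apply in_or_app; auto.
        -- intros y Hy. destruct (Nat.eq_dec (code y) n) as [e|e].
           ++ left. apply code_inj. congruence.
           ++ right. apply in_or_app; right. apply filter_In; split; auto.
              unfold nf. apply Nat.eqb_neq in e. rewrite e. reflexivity.
    + apply Hn1. apply H; auto. intros y Hy. destruct (Hlg1 y Hy) as [?|?]; auto.
      exfalso; apply Hno; eauto.
Qed.

Fixpoint stage (G0 D0 : X -> Prop) (n : nat) : (X -> Prop) * (X -> Prop) :=
  match n with
  | O => (G0, D0)
  | S n => let GD := stage G0 D0 n in
    (fun x => fst GD x \/ (code x = n /\ fsat Phi (fun y => fst GD y \/ code y = n) (snd GD)),
     fun x => snd GD x \/ (code x = n /\ ~ fsat Phi (fun y => fst GD y \/ code y = n) (snd GD)))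
  end.

Lemma stage_mono G0 D0 n m x : n <= m ->
  (fst (stage G0 D0 n) x -> fst (stage G0 D0 m) x) /\ (snd (stage G0 D0 n) x -> snd (stage G0 D0 m) x).
Proof.
  induction 1; [tauto|]. simpl. tauto.
Qed.

Lemma stage_ok G0 D0 n : fsat Phi G0 D0 -> fsat Phi (fst (stage G0 D0 n)) (snd (stage G0 D0 n)).
Proof. intro H. induction n; simpl; auto. apply step_ok; auto. Qed.

Lemma list_bound (P : nat -> X -> Prop) (Pm : forall n m x, n <= m -> P n x -> P m x) l :
  (forall x, In x l -> exists n, P n x) -> exists N, forall x, In x l -> P N x.
Proof.
  induction l as [|a l IH]; intro H.
  - exists 0; intros x [].
  - destruct (H a (or_introl eq_refl)) as [n Hn].
    destruct IH as [N HN]. { intros; apply H; right; auto. }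
    exists (Nat.max n N). intros x [<-|Hx].
    + apply Pm with n; auto. apply Nat.le_max_l.
    + apply Pm with N; auto. apply Nat.le_max_r.
Qed.

Lemma lindenbaum G0 D0 : fsat Phi G0 D0 -> exists G D,
  (forall x, G0 x -> G x) /\ (forall x, D0 x -> D x) /\ (forall x, G x \/ D x) /\ fsat Phi G D.
Proof.
  intro H.
  exists (fun x => exists n, fst (stage G0 D0 n) x), (fun x => exists n, snd (stage G0 D0 n) x).
  split; [intros x Hx; exists 0; exact Hx|].
  split; [intros x Hx; exists 0; exact Hx|].
  split.
  - intro x. simpl.
    destruct (classic (fsat Phi (fun y => fst (stage G0 D0 (code x)) y \/ code y = code x) (snd (stage G0 D0 (code x))))) as [h|h].
    + left. exists (S (code x)). simpl. right; auto.
    + right. exists (S (code x)). simpl. right; auto.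
  - intros lg ld Hlg Hld.
    destruct (list_bound (fun n x => fst (stage G0 D0 n) x) (fun n m x h => proj1 (stage_mono G0 D0 n m x h)) lg Hlg) as [N1 H1].
    destruct (list_bound (fun n x => snd (stage G0 D0 n) x) (fun n m x h => proj2 (stage_mono G0 D0 n m x h)) ld Hld) as [N2 H2].
    apply (stage_ok G0 D0 (Nat.max N1 N2) H).
    + intros x Hx. apply (proj1 (stage_mono G0 D0 N1 _ x (Nat.le_max_l _ _))); auto.
    + intros x Hx. apply (proj2 (stage_mono G0 D0 N2 _ x (Nat.le_max_r _ _))); auto.
Qed.
End Lind.

Lemma persist (M : model) A : forall w w', le M w w' ->
  (ver M w A -> ver M w' A) /\ (fal M w A -> fal M w' A).
Proof.
  induction A; intros w w' Hle; simpl.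
  - split; intro; [eapply Vp_up|eapply Vm_up]; eauto.
  - destruct (IHA1 w w' Hle), (IHA2 w w' Hle). tauto.
  - destruct (IHA1 w w' Hle), (IHA2 w w' Hle). tauto.
  - destruct (IHA1 w w' Hle), (IHA2 w w' Hle). split.
    + intros Hh v Hv. apply Hh. eapply le_trans; eauto.
    + tauto.
  - destruct (IHA w w' Hle). tauto.
  - split.
    + intros Hh v u Hv. apply Hh. eapply le_trans; eauto.
    + intros [u [HR Hu]]. destruct (c1 M _ _ _ _ _ Hle HR) as [v' [Hv' HR']].
      exists v'. split; auto. apply (IHA2 u v' Hv'); auto.
Qed.
Definition pt {M : model} (x y : W M) (b : bool) := if b then y else x.

Definition PhiK (K : forall M : model, W M -> W M -> Prop) (lg ld : list (bool * form)) :=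
  exists M (x y : W M), K M x y /\ (forall p, In p lg -> ver M (pt x y (fst p)) (snd p)) /\
     (forall p, In p ld -> ~ ver M (pt x y (fst p)) (snd p)).

Lemma PhiK_mono K lg ld lg' ld' : PhiK K lg ld -> incl lg' lg -> incl ld' ld -> PhiK K lg' ld'.
Proof.
  intros [M [x [y [HK [H1 H2]]]]] I1 I2. exists M, x, y. split; auto.
Qed.

Lemma PhiK_cut K p lg ld : PhiK K lg ld -> PhiK K (p::lg) ld \/ PhiK K lg (p::ld).
Proof.
  intros [M [x [y [HK [H1 H2]]]]].
  destruct (classic (ver M (pt x y (fst p)) (snd p))) as [h|h].
  - left. exists M, x, y. split; auto. split; auto. intros q [<-|Hq]; auto.
  - right. exists M, x, y. split; auto. split; auto. intros q [<-|Hq]; auto.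
Qed.

Lemma lind K G D : fsat (PhiK K) G D -> exists G' D',
  (forall x, G x -> G' x) /\ (forall x, D x -> D' x) /\ (forall x, G' x \/ D' x) /\ fsat (PhiK K) G' D'.
Proof.
  apply (lindenbaum _ codeX codeX_inj (PhiK K) (PhiK_mono K) (PhiK_cut K)).
Qed.

Lemma disj_fsat K G D p : fsat (PhiK K) G D -> G p -> D p -> False.
Proof.
  intros H HG HD. destruct (H [p] [p]) as [M [x [y [_ [H1 H2]]]]].
  - intros q [<-|[]]; auto.
  - intros q [<-|[]]; auto.
  - apply (H2 p (or_introl eq_refl)), H1; left; auto.
Qed.

Definition theory (T : form -> Prop) := forall lg ld : list form,
  (forall x, In x lg -> T x) -> (forall x, In x ld -> ~ T x) ->
  exists M (w : W M), (forall x, In x lg -> ver M w x) /\ (forall x, In x ld -> ~ ver M w x).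

Lemma config_theory K G D b : fsat (PhiK K) G D -> (forall p, G p \/ D p) ->
  theory (fun f => G (b, f)).
Proof.
  intros H Hc lg ld Hlg Hld.
  destruct (H (map (pair b) lg) (map (pair b) ld)) as [M [x [y [_ [H1 H2]]]]].
  - intros p Hp. apply in_map_iff in Hp as [f [<- Hf]]. apply Hlg; auto.
  - intros p Hp. apply in_map_iff in Hp as [f [<- Hf]].
    destruct (Hc (b, f)); auto. exfalso; apply (Hld f); auto.
  - exists M, (pt x y b). split; intros f Hf.
    + apply (H1 (b, f)). apply in_map; auto.
    + apply (H2 (b, f)). apply in_map; auto.
Qed.

Lemma closure T lg ld : theory T -> (forall x, In x lg -> T x) ->
  (forall M w, (forall x, In x lg -> ver M w x) -> exists y, In y ld /\ ver M w y) ->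
  exists y, In y ld /\ T y.
Proof.
  intros HT Hlg Hs. apply NNPP; intro Hn.
  destruct (HT lg ld Hlg) as [M [w [H1 H2]]].
  - intros y Hy HTy. apply Hn; eauto.
  - destruct (Hs M w H1) as [y [Hy Hv]]. apply (H2 y Hy Hv).
Qed.

Lemma cl1 T lg c : theory T -> (forall x, In x lg -> T x) ->
  (forall M w, (forall x, In x lg -> ver M w x) -> ver M w c) -> T c.
Proof.
  intros HT Hlg Hs. destruct (closure T lg [c] HT Hlg) as [y [[<-|[]] Hy]]; auto.
  intros M w H. exists c; split; [left; auto|auto].
Qed.

Lemma cl2 T lg a b : theory T -> (forall x, In x lg -> T x) ->
  (forall M w, (forall x, In x lg -> ver M w x) -> ver M w a \/ ver M w b) -> T a \/ T b.
Proof.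
  intros HT Hlg Hs. destruct (closure T lg [a; b] HT Hlg) as [y [[<-|[<-|[]]] Hy]]; auto.
  intros M w H. destruct (Hs M w H); [exists a|exists b]; simpl; auto.
Qed.

Definition top := Imp (Var 0) (Var 0).
Fixpoint conj (l : list form) := match l with [] => top | a :: l => And a (conj l) end.
Fixpoint disj (d : form) (l : list form) := match l with [] => d | e :: l => Or d (disj e l) end.

Lemma ver_conj M w l : ver M w (conj l) <-> forall x, In x l -> ver M w x.
Proof.
  induction l; simpl.
  - split; [intros _ x []|intros _ v _ h; exact h].
  - rewrite IHl. split; [intros [h1 h2] x [<-|hx]; auto| intro h; split; auto].
Qed.

Lemma ver_disj M w d l : ver M w (disj d l) <-> exists y, In y (d :: l) /\ ver M w y.
Proof.
  revert d; induction l; intro d; simpl.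
  - split; [intro h; exists d; auto| intros [y [[<-|[]] h]]; auto].
  - rewrite IHl. split.
    + intros [h|[y [hy h]]]; [exists d; auto| exists y; auto].
    + intros [y [[<-|hy] h]]; [left; auto| right; exists y; auto].
Qed.

Definition sel (b : bool) (l : list (bool * form)) := map snd (filter (fun p => Bool.eqb (fst p) b) l).

Lemma sel_in p l : In p l -> In (snd p) (sel (fst p) l).
Proof.
  intro H. unfold sel. apply in_map. apply filter_In. split; auto. apply Bool.eqb_reflx.
Qed.

Lemma in_sel b f l : In f (sel b l) -> In (b, f) l.
Proof.
  unfold sel. intro H. apply in_map_iff in H as [[b' f'] [E H]]. simpl in E; subst.
  apply filter_In in H as [H E]. simpl in E. apply Bool.eqb_prop in E. subst; auto.
Qed.

Definition triv : model.
Proof.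
  refine {| W := unit; W_ne := inhabits tt; le := fun _ _ => True;
            R := fun _ _ _ _ => True; Vp := fun _ _ => True; Vm := fun _ _ => True |};
  intros; try exact I; eauto.
Defined.

Lemma triv_all A (w : W triv) : ver triv w A /\ fal triv w A.
Proof.
  revert w; induction A; intro w; simpl.
  - split; exact I.
  - destruct (IHA1 w), (IHA2 w). tauto.
  - destruct (IHA1 w), (IHA2 w). tauto.
  - split; [intros; apply IHA2|split; [apply IHA1|apply IHA2]].
  - destruct (IHA w). tauto.
  - split; [intros; apply IHA2| exists tt; split; [exact I|apply IHA2]].
Qed.

Definition world := { T : form -> Prop | theory T }.
Definition th (S : world) : form -> Prop := proj1_sig S.
Definition KA (A : form) : forall M : model, W M -> W M -> Prop :=
  fun M x y => R M (fun z => ver M z A) (fun z => fal M z A) x y.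
Definition GT (T U : world) : bool * form -> Prop :=
  fun p => if fst p then th U (snd p) else th T (snd p).
Definition DT (T U : world) : bool * form -> Prop := fun p => ~ GT T U p.
Definition Real A T U := fsat (PhiK (KA A)) (GT T U) (DT T U).
Definition Rc (X Y : world -> Prop) (T U : world) : Prop :=
  exists A, (forall S, X S <-> th S A) /\ (forall S, Y S <-> th S (Neg A)) /\ Real A T U.
Definition lec (T U : world) := forall f, th T f -> th U f.

Lemma VF A T U B : Real A T U -> th T (Cond A B) -> th U B.
Proof.
  intros H HT. apply NNPP; intro Hn.
  destruct (H [(false, Cond A B)] [(true, B)]) as [M [x [y [HK [H1 H2]]]]].
  - intros p [<-|[]]; exact HT.
  - intros p [<-|[]]; exact Hn.
  - apply (H2 (true, B) (or_introl eq_refl)). simpl.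
    exact (H1 (false, Cond A B) (or_introl eq_refl) x y (le_refl M x) HK).
Qed.

Lemma FB A T U B : Real A T U -> th U (Neg B) -> th T (Neg (Cond A B)).
Proof.
  intros H HU. apply NNPP; intro Hn.
  destruct (H [(true, Neg B)] [(false, Neg (Cond A B))]) as [M [x [y [HK [H1 H2]]]]].
  - intros p [<-|[]]; exact HU.
  - intros p [<-|[]]; exact Hn.
  - apply (H2 _ (or_introl eq_refl)). simpl. exists y. split; [exact HK|].
    exact (H1 _ (or_introl eq_refl)).
Qed.

Definition KT : forall M : model, W M -> W M -> Prop := fun _ _ _ => True.

Lemma ext_world a b : (forall S : world, th S a -> th S b) ->
  forall M w, ver M w a -> ver M w b.
Proof.
  intros H M w Ha. apply NNPP; intro Hb.
  assert (Hf : fsat (PhiK KT) (fun p => p = (false, a)) (fun p => p = (false, b))).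
  { intros lg ld Hlg Hld. exists M, w, w. split; [exact I|]. split.
    - intros p Hp. rewrite (Hlg p Hp). exact Ha.
    - intros p Hp. rewrite (Hld p Hp). exact Hb. }
  destruct (lind _ _ _ Hf) as [G' [D' [HG [HD [Hc Hs]]]]].
  set (S := exist _ (fun f => G' (false, f)) (config_theory _ _ _ false Hs Hc) : world).
  assert (Hsb : th S b). { apply H. apply (HG (false, a)). reflexivity. }
  apply (disj_fsat _ _ _ (false, b) Hs Hsb). apply HD; reflexivity.
Qed.

Lemma real_eq A a V U : (forall S, th S A <-> th S a) -> (forall S, th S (Neg A) <-> th S (Neg a)) ->
  Real A V U -> Real a V U.
Proof.
  intros H1 H2 HR.
  assert (E : KA A = KA a).
  { unfold KA. apply functional_extensionality_dep; intro M.
    assert (E1 : (fun z => ver M z A) = (fun z => ver M z a)).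
    { apply functional_extensionality; intro z. apply propositional_extensionality.
      split; apply ext_world; intro S; apply H1. }
    assert (E2 : (fun z => fal M z A) = (fun z => fal M z a)).
    { apply functional_extensionality; intro z. apply propositional_extensionality.
      split; intro h; [apply (ext_world (Neg A) (Neg a)) with (w := z) (M := M) | apply (ext_world (Neg a) (Neg A)) with (w := z) (M := M)]; auto; intro S; apply H2. }
    rewrite E1, E2. reflexivity. }
  unfold Real in *. rewrite <- E. exact HR.
Qed.

Lemma Rc_c1 X Y T T' U : lec T T' -> Rc X Y T U -> exists U', lec U U' /\ Rc X Y T' U'.
Proof.
  intros Hle [A [HX [HY HR]]].
  assert (Hf : fsat (PhiK (KA A))
     (fun p => if fst p then th U (snd p) else th T' (snd p))
     (fun p => if fst p then False else ~ th T' (snd p))).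
  { intros lg ld Hlg Hld.
    assert (Hc : th T' (Neg (Cond A (Neg (conj (sel true lg)))))).
    { apply Hle. apply (FB A T U); [exact HR|].
      apply (cl1 _ (sel true lg)); [exact (proj2_sig U)| |].
      - intros x Hx. exact (Hlg _ (in_sel _ _ _ Hx)).
      - intros M w Hw. simpl. apply ver_conj; auto. }
    destruct (proj2_sig T' (Neg (Cond A (Neg (conj (sel true lg)))) :: sel false lg) (sel false ld))
      as [M [w [H1 H2]]].
    - intros x [<-|Hx]; [exact Hc|]. exact (Hlg _ (in_sel _ _ _ Hx)).
    - intros x Hx. exact (Hld _ (in_sel _ _ _ Hx)).
    - destruct (H1 _ (or_introl eq_refl)) as [u [HRu Hu]]. simpl in Hu.
      rewrite ver_conj in Hu.
      exists M, w, u. split; [exact HRu|]. split.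
      + intros [b f] Hp. destruct b; simpl.
        * apply Hu. apply (sel_in (true, f)); auto.
        * apply H1. right. apply (sel_in (false, f)); auto.
      + intros [b f] Hp. destruct b; simpl.
        * exfalso. exact (Hld _ Hp).
        * apply H2. apply (sel_in (false, f)); auto. }
  destruct (lind _ _ _ Hf) as [G' [D' [HG [HD [Hc Hs]]]]].
  exists (exist _ (fun f => G' (true, f)) (config_theory _ _ _ true Hs Hc)).
  split.
  - intros f Hf'. apply (HG (true, f)). exact Hf'.
  - exists A. split; [exact HX|]. split; [exact HY|].
    unfold Real. eapply fsat_anti; [exact Hs| |].
    + intros [b f]; unfold GT; destruct b; simpl; auto; intro h; apply (HG (false, f)); exact h.
    + intros [b f]; unfold DT, GT; destruct b; simpl; intro Hn.
      * destruct (Hc (true, f)); [contradiction|auto].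
      * apply (HD (false, f)); exact Hn.
Qed.

Lemma Rc_c2 X Y T U U' : Rc X Y T U -> lec U U' -> exists T', lec T T' /\ Rc X Y T' U'.
Proof.
  intros [A [HX [HY HR]]] Hle.
  assert (Hf : fsat (PhiK (KA A))
     (fun p => if fst p then th U' (snd p) else th T (snd p))
     (fun p => if fst p then ~ th U' (snd p) else False)).
  { intros lg ld Hlg Hld.
    destruct (sel true ld) as [|d ds] eqn:Ed.
    - exists triv, tt, tt. split; [exact I|]. split.
      + intros p _. apply triv_all.
      + intros [b f] Hp. destruct b.
        * apply (sel_in (true, f)) in Hp. simpl in Hp. rewrite Ed in Hp. destruct Hp.
        * exfalso; exact (Hld _ Hp).
    - apply NNPP; intro Hn.
      assert (Hsem : forall M x y, KA A M x y -> (forall f, In f (sel false lg) -> ver M x f) ->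
                (forall f, In f (sel true lg) -> ver M y f) -> exists e, In e (d :: ds) /\ ver M y e).
      { intros M x y HK H0 H1. apply NNPP; intro Hne. apply Hn. exists M, x, y.
        split; [exact HK|]. split.
        - intros [b f] Hp; destruct b; simpl; [apply H1|apply H0]; apply (sel_in (_, f)) in Hp; exact Hp.
        - intros [b f] Hp Hv; destruct b; simpl in Hv.
          + apply Hne. exists f. split; [|exact Hv]. rewrite <- Ed. apply (sel_in (true, f)) in Hp; exact Hp.
          + exact (Hld _ Hp). }
      set (E := Imp (conj (sel true lg)) (disj d ds)).
      assert (HT : th T (Cond A E)).
      { apply (cl1 _ (sel false lg)); [exact (proj2_sig T)| |].
        - intros x Hx. exact (Hlg _ (in_sel _ _ _ Hx)).
        - intros M w Hw. simpl. intros v u Hwv HRu u' Huu' Hcj.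
          destruct (c2 M _ _ _ _ _ HRu Huu') as [v' [Hvv' HR']].
          apply ver_disj. apply (Hsem M v' u'); auto.
          + intros f Hf'. apply (proj1 (persist M f w v' (le_trans M _ _ _ Hwv Hvv'))). auto.
          + apply ver_conj; auto. }
      assert (HU : th U' E) by (apply Hle; exact (VF A T U E HR HT)).
      destruct (closure (th U') (E :: sel true lg) (d :: ds) (proj2_sig U')) as [e [He HUe]].
      + intros x [<-|Hx]; [exact HU|]. exact (Hlg _ (in_sel _ _ _ Hx)).
      + intros M w Hw. apply ver_disj.
        apply (Hw E (or_introl eq_refl) w (le_refl M w)). apply ver_conj. intros; apply Hw; right; auto.
      + rewrite <- Ed in He. apply in_sel in He. exact (Hld _ He HUe). }
  destruct (lind _ _ _ Hf) as [G' [D' [HG [HD [Hc Hs]]]]].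
  exists (exist _ (fun f => G' (false, f)) (config_theory _ _ _ false Hs Hc)).
  split.
  - intros f Hf'. apply (HG (false, f)). exact Hf'.
  - exists A. split; [exact HX|]. split; [exact HY|].
    unfold Real. eapply fsat_anti; [exact Hs| |].
    + intros [b f]; unfold GT; destruct b; simpl; auto; intro h; apply (HG (true, f)); exact h.
    + intros [b f]; unfold DT, GT; destruct b; simpl; intro Hn.
      * apply (HD (true, f)); exact Hn.
      * destruct (Hc (false, f)); [contradiction|auto].
Qed.

Lemma top_theory : theory (fun _ => True).
Proof.
  intros lg ld _ Hld. exists triv, tt. split.
  - intros; apply triv_all.
  - intros x Hx. exfalso; exact (Hld x Hx I).
Qed.

Definition Mc : model.
Proof.
  refine {| W := world; W_ne := inhabits (exist _ (fun _ => True) top_theory);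
            le := lec; R := Rc;
            Vp := fun p S => th S (Var p); Vm := fun p S => th S (Neg (Var p)) |}.
  - intros w f h; exact h.
  - intros u v w h1 h2 f h; auto.
  - intros p w w' h1 h2; auto.
  - intros p w w' h1 h2; auto.
  - exact Rc_c1.
  - exact Rc_c2.
Defined.

Lemma split_list (P : form -> Prop) a l : (forall x, In x l -> P x \/ x = a) ->
  exists l', (forall x, In x l' -> P x) /\ (forall x, In x l -> In x l' \/ x = a).
Proof.
  induction l as [|y l IH]; intro H.
  - exists []. split; intros x [].
  - destruct IH as [l' [H1 H2]]. { intros; apply H; right; auto. }
    destruct (H y (or_introl eq_refl)) as [Hy|Hy].
    + exists (y :: l'). split.
      * intros x [<-|Hx]; auto.
      * intros x [<-|Hx]; [left; left; auto|]. destruct (H2 x Hx); auto. left; right; auto.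
    + exists l'. split; auto. intros x [<-|Hx]; auto.
Qed.

Lemma truth A : forall S : world, (ver Mc S A <-> th S A) /\ (fal Mc S A <-> th S (Neg A)).
Proof.
  induction A as [p|a IHa b IHb|a IHa b IHb|a IHa b IHb|a IHa|a IHa b IHb]; intro S; simpl.
  - split; reflexivity.
  - destruct (IHa S) as [Ha1 Ha2], (IHb S) as [Hb1 Hb2]. rewrite Ha1, Ha2, Hb1, Hb2. split; split.
    + intros [h1 h2]. apply (cl1 _ [a; b]); [exact (proj2_sig S)| |].
      * intros x [<-|[<-|[]]]; auto.
      * intros M w Hw. simpl. split; [exact (Hw _ (or_introl eq_refl)) | exact (Hw _ (or_intror (or_introl eq_refl)))].
    + intro h. split; apply (cl1 _ [And a b]); try exact (proj2_sig S);
        try (intros x [<-|[]]; exact h); intros M w Hw; apply (Hw _ (or_introl eq_refl)).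
    + intros [h|h]; [apply (cl1 _ [Neg a])|apply (cl1 _ [Neg b])]; try exact (proj2_sig S);
        try (intros x [<-|[]]; exact h); intros M w Hw; simpl; [left|right]; apply (Hw _ (or_introl eq_refl)).
    + intro h. apply (cl2 _ [Neg (And a b)]); [exact (proj2_sig S)| intros x [<-|[]]; exact h|].
      intros M w Hw. apply (Hw _ (or_introl eq_refl)).
  - destruct (IHa S) as [Ha1 Ha2], (IHb S) as [Hb1 Hb2]. rewrite Ha1, Ha2, Hb1, Hb2. split; split.
    + intros [h|h]; [apply (cl1 _ [a])|apply (cl1 _ [b])]; try exact (proj2_sig S);
        try (intros x [<-|[]]; exact h); intros M w Hw; simpl; [left|right]; apply (Hw _ (or_introl eq_refl)).
    + intro h. apply (cl2 _ [Or a b]); [exact (proj2_sig S)| intros x [<-|[]]; exact h|].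
      intros M w Hw. apply (Hw _ (or_introl eq_refl)).
    + intros [h1 h2]. apply (cl1 _ [Neg a; Neg b]); [exact (proj2_sig S)| |].
      * intros x [<-|[<-|[]]]; auto.
      * intros M w Hw. simpl. split; [exact (Hw _ (or_introl eq_refl)) | exact (Hw _ (or_intror (or_introl eq_refl)))].
    + intro h. split; apply (cl1 _ [Neg (Or a b)]); try exact (proj2_sig S);
        try (intros x [<-|[]]; exact h); intros M w Hw; apply (Hw _ (or_introl eq_refl)).
  - split.
    + split.
      * intro H. apply NNPP; intro Hn.
        assert (Hf : fsat (PhiK KT)
           (fun p => if fst p then False else (th S (snd p) \/ snd p = a))
           (fun p => if fst p then False else snd p = b)).
        { intros lg ld Hlg Hld.
          destruct (split_list (th S) a (sel false lg)) as [l' [Hl1 Hl2]].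
          { intros x Hx. exact (Hlg _ (in_sel _ _ _ Hx)). }
          destruct (proj2_sig S l' [Imp a b] Hl1) as [M [w [H1 H2]]].
          { intros x [<-|[]]; exact Hn. }
          assert (Hi := H2 _ (or_introl eq_refl)). simpl in Hi.
          apply not_all_ex_not in Hi as [v Hi].
          apply imply_to_and in Hi as [Hwv Hi]. apply imply_to_and in Hi as [Hva Hvb].
          exists M, v, v. split; [exact I|]. split.
          - intros [[|] f] Hp; simpl.
            + (exfalso; exact (Hlg _ Hp)).
            + destruct (Hl2 f (sel_in (false, f) lg Hp)) as [h| ->]; auto.
              exact (proj1 (persist M f w v Hwv) (H1 f h)).
          - intros [[|] f] Hp; simpl.
            + exfalso; exact (Hld _ Hp).
            + rewrite (Hld _ Hp : f = b). exact Hvb. }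
        destruct (lind _ _ _ Hf) as [G' [D' [HG [HD [Hc Hs]]]]].
        set (V := exist _ (fun f => G' (false, f)) (config_theory _ _ _ false Hs Hc) : world).
        assert (HSV : lec S V). { intros f h. apply (HG (false, f)). simpl; auto. }
        assert (HVa : th V a). { apply (HG (false, a)). simpl; auto. }
        assert (HVb : th V b).
        { apply (proj1 (proj1 (IHb V))). apply (H V HSV). apply (proj2 (proj1 (IHa V))). exact HVa. }
        apply (disj_fsat _ _ _ (false, b) Hs HVb). apply (HD (false, b)). reflexivity.
      * intros H V HSV HVa. apply (proj2 (proj1 (IHb V))). apply (proj1 (proj1 (IHa V))) in HVa.
        apply (cl1 _ [Imp a b; a]); [exact (proj2_sig V)| |].
        -- intros x [<-|[<-|[]]]; auto.
        -- intros M w Hw. apply (Hw _ (or_introl eq_refl) w (le_refl M w)). apply Hw. simpl; auto.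
    + destruct (IHa S) as [Ha1 Ha2], (IHb S) as [Hb1 Hb2]. rewrite Ha1, Hb2. split.
      * intros [h1 h2]. apply (cl1 _ [a; Neg b]); [exact (proj2_sig S)| |].
        -- intros x [<-|[<-|[]]]; auto.
        -- intros M w Hw. simpl. split; [exact (Hw _ (or_introl eq_refl)) | exact (Hw _ (or_intror (or_introl eq_refl)))].
      * intro h. split; apply (cl1 _ [Neg (Imp a b)]); try exact (proj2_sig S);
          try (intros x [<-|[]]; exact h); intros M w Hw; apply (Hw _ (or_introl eq_refl)).
  - destruct (IHa S) as [Ha1 Ha2]. rewrite Ha1, Ha2. split; [reflexivity|]. split.
    + intro h. apply (cl1 _ [a]); [exact (proj2_sig S)|intros x [<-|[]]; exact h|].
      intros M w Hw. apply (Hw _ (or_introl eq_refl)).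
    + intro h. apply (cl1 _ [Neg (Neg a)]); [exact (proj2_sig S)|intros x [<-|[]]; exact h|].
      intros M w Hw. apply (Hw _ (or_introl eq_refl)).
  - assert (HRc : forall V U, Rc (fun x => ver Mc x a) (fun x => fal Mc x a) V U <-> Real a V U).
    { intros V U. split.
      - intros [A [HX [HY HR]]]. apply (real_eq A a V U); auto.
        + intro S'. rewrite <- HX. apply (proj1 (IHa S')).
        + intro S'. rewrite <- HY. apply (proj2 (IHa S')).
      - intro HR. exists a. split; [intro S'; apply (proj1 (IHa S'))|]. split; [intro S'; apply (proj2 (IHa S'))|exact HR]. }
    split; split.
    + intro H. apply NNPP; intro Hn.
      assert (Hf : fsat (PhiK (KA a))
         (fun p => if fst p then False else th S (snd p))
         (fun p => if fst p then snd p = b else False)).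
      { intros lg ld Hlg Hld.
        destruct (proj2_sig S (sel false lg) [Cond a b]) as [M [w [H1 H2]]].
        { intros x Hx. exact (Hlg _ (in_sel _ _ _ Hx)). }
        { intros x [<-|[]]; exact Hn. }
        assert (Hi := H2 _ (or_introl eq_refl)). simpl in Hi.
        apply not_all_ex_not in Hi as [v Hi]. apply not_all_ex_not in Hi as [u Hi].
        apply imply_to_and in Hi as [Hwv Hi]. apply imply_to_and in Hi as [HRu Hub].
        exists M, v, u. split; [exact HRu|]. split.
        - intros [[|] f] Hp; simpl.
          + (exfalso; exact (Hlg _ Hp)).
          + exact (proj1 (persist M f w v Hwv) (H1 f (sel_in (false, f) lg Hp))).
        - intros [[|] f] Hp; simpl.
          + rewrite (Hld _ Hp : f = b). exact Hub.
          + exfalso; exact (Hld _ Hp). }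
      destruct (lind _ _ _ Hf) as [G' [D' [HG [HD [Hc Hs]]]]].
      set (V := exist _ (fun f => G' (false, f)) (config_theory _ _ _ false Hs Hc) : world).
      set (U := exist _ (fun f => G' (true, f)) (config_theory _ _ _ true Hs Hc) : world).
      assert (HSV : lec S V). { intros f h. apply (HG (false, f)). simpl; auto. }
      assert (HR : Real a V U).
      { unfold Real. eapply fsat_anti; [exact Hs| |].
        - intros [[|] f]; unfold GT; simpl; auto.
        - intros [[|] f]; unfold DT, GT; simpl; intro h.
          + destruct (Hc (true, f)); tauto.
          + destruct (Hc (false, f)); tauto. }
      assert (HUb : th U b). { apply (proj1 (proj1 (IHb U))). apply (H V U HSV). apply HRc. exact HR. }
      apply (disj_fsat _ _ _ (true, b) Hs HUb). apply (HD (true, b)). reflexivity.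
    + intros H V U HSV HR. apply HRc in HR. apply (proj2 (proj1 (IHb U))).
      apply (VF a V U b HR). apply HSV. exact H.
    + intros [U [HR HU]]. apply HRc in HR. apply (proj1 (proj2 (IHb U))) in HU.
      exact (FB a S U b HR HU).
    + intro H.
      assert (Hf : fsat (PhiK (KA a))
         (fun p => if fst p then snd p = Neg b else th S (snd p))
         (fun p => if fst p then False else ~ th S (snd p))).
      { intros lg ld Hlg Hld.
        destruct (proj2_sig S (Neg (Cond a b) :: sel false lg) (sel false ld)) as [M [w [H1 H2]]].
        { intros x [<-|Hx]; [exact H|]. exact (Hlg _ (in_sel _ _ _ Hx)). }
        { intros x Hx. exact (Hld _ (in_sel _ _ _ Hx)). }
        destruct (H1 _ (or_introl eq_refl)) as [u [HRu Hu]].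
        exists M, w, u. split; [exact HRu|]. split.
        - intros [[|] f] Hp; simpl.
          + rewrite (Hlg _ Hp : f = Neg b). exact Hu.
          + apply H1. right. exact (sel_in (false, f) lg Hp).
        - intros [[|] f] Hp; simpl.
          + exfalso; exact (Hld _ Hp).
          + apply H2. exact (sel_in (false, f) ld Hp). }
      destruct (lind _ _ _ Hf) as [G' [D' [HG [HD [Hc Hs]]]]].
      set (U := exist _ (fun f => G' (true, f)) (config_theory _ _ _ true Hs Hc) : world).
      exists U. split.
      * apply HRc. unfold Real. eapply fsat_anti; [exact Hs| |].
        -- intros [[|] f]; unfold GT; simpl; auto; intro h; apply (HG (false, f)); exact h.
        -- intros [[|] f]; unfold DT, GT; simpl; intro h.
           ++ destruct (Hc (true, f)); tauto.
           ++ apply (HD (false, f)); exact h.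
      * apply (proj2 (proj2 (IHb U))). apply (HG (true, Neg b)). reflexivity.
Qed.

Theorem corollary1 (Gamma Delta : form -> Prop) :
  ~ conseq Gamma Delta <->
  (forall Gamma' Delta' : form -> Prop,
     finite_subset Gamma' Gamma -> finite_subset Delta' Delta ->
     ~ conseq Gamma' Delta').
Proof.
  split.
  - intros H G' D' [_ HG] [_ HD] Hc. apply H. intros [M [w [H1 H2]]].
    apply Hc. exists M, w. split; auto.
  - intros H Hc.
    assert (Hf : fsat (PhiK KT)
       (fun p => if fst p then False else Gamma (snd p))
       (fun p => if fst p then False else Delta (snd p))).
    { intros lg ld Hlg Hld.
      assert (Hn := H (fun x => In x (sel false lg)) (fun x => In x (sel false ld))).
      assert (F1 : finite_subset (fun x => In x (sel false lg)) Gamma).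
      { split; [exists (sel false lg); reflexivity|]. intros x Hx. exact (Hlg _ (in_sel _ _ _ Hx)). }
      assert (F2 : finite_subset (fun x => In x (sel false ld)) Delta).
      { split; [exists (sel false ld); reflexivity|]. intros x Hx. exact (Hld _ (in_sel _ _ _ Hx)). }
      destruct (NNPP _ (Hn F1 F2)) as [M [w [H1 H2]]].
      { exists M, w, w. split; [exact I|]. split.
        + intros [[|] f] Hp; simpl; [(exfalso; exact (Hlg _ Hp))|]. apply H1. exact (sel_in (false, f) lg Hp).
        + intros [[|] f] Hp; simpl; [exfalso; exact (Hld _ Hp)|]. apply H2. exact (sel_in (false, f) ld Hp). } }
    destruct (lind _ _ _ Hf) as [G' [D' [HG [HD [Hc' Hs]]]]].
    set (S := exist _ (fun f => G' (false, f)) (config_theory _ _ _ false Hs Hc') : world).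
    apply Hc. exists Mc, S. split.
    + intros A HA. apply (proj2 (proj1 (truth A S))). apply (HG (false, A)). exact HA.
    + intros B HB Hv. apply (proj1 (proj1 (truth B S))) in Hv.
      apply (disj_fsat _ _ _ (false, B) Hs Hv). apply (HD (false, B)). exact HB.
Qed.
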